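(* Let $G$ be a real $n\times m$ matrix and $\mathbf v\in\mathbb R^n$, and let $\mathcal G=\{x\in\mathbb R^m: Gx\le \mathbf v\}$, with the inequality understood componentwise. Let $P$ be the nonnegative orthant of $\mathbb R^n$ and $F=\mathcal R(G)$ the range of $G$. Write $\mathbf v=\mathbf v_F+\upsilon$, where $\mathbf v_F$ is the orthogonal projection of $\mathbf v$ onto $F$ and $\upsilon$ is the orthogonal projection of $\mathbf v$ onto $F^\perp$. Assume that $\upsilon\neq 0$ and that $F\cap P=\{0\}$ (strict tangency). Let $C_e=\{t\upsilon+z: t\ge 0,\ z\in F\}$. Then $$\mathcal G\neq\emptyset \iff C_e\cap P\neq\{0\},$$ or, equivalently, $\mathcal G=\emptyset\iff C_e\cap P=\{0\}$.
   Context: The condition $F\cap P=\{0\}$ says that the subspace $\mathcal R(G)$ meets the nonnegative orthant only at the origin; the paper calls this strict tangency. $C_e$ is the convex cone generated by the affine set $\upsilon+F$. *)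

(* Defs.v *)
From HB Require Import structures.
From mathcomp Require Import all_boot all_order all_algebra.
From mathcomp Require Import reals.
Set Implicit Arguments. Unset Strict Implicit. Unset Printing Implicit Defensive.
Import Order.TTheory GRing.Theory Num.Theory.
Local Open Scope ring_scope.

Section Defs.
Variables (R : realType) (n m : nat).

Definition in_range (G : 'M[R]_(n, m)) (y : 'cV[R]_n) : Prop :=
  exists x : 'cV[R]_m, y = G *m x.

Definition in_range_perp (G : 'M[R]_(n, m)) (u : 'cV[R]_n) : Prop :=
  forall y, in_range G y -> (u^T *m y) = 0.

Definition nonneg_vec (y : 'cV[R]_n) : Prop := forall i, 0 <= y i 0.

Definition feasible (G : 'M[R]_(n, m)) (v : 'cV[R]_n) (x : 'cV[R]_m) : Prop :=
  forall i, (G *m x) i 0 <= v i 0.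

Definition in_Ce (G : 'M[R]_(n, m)) (ups : 'cV[R]_n) (y : 'cV[R]_n) : Prop :=
  exists t : R, exists z : 'cV[R]_n, 0 <= t /\ in_range G z /\ y = t *: ups + z.

End Defs.

(* Main.v *)
Require Import Defs.
From HB Require Import structures.
From mathcomp Require Import all_boot all_order all_algebra.
From mathcomp Require Import reals.
Import Order.TTheory GRing.Theory Num.Theory.
Local Open Scope ring_scope.

Lemma trmx_self0 (R : realType) (n : nat) (u : 'cV[R]_n) :
  u^T *m u = 0 -> u = 0.
Proof.
move=> h; apply/matrixP => i j; rewrite (ord1 j) [RHS]mxE.
have := congr1 (fun M : 'M[R]_1 => M 0 0) h; rewrite !mxE => h0.
have hp : forall k : 'I_n, true -> 0 <= u^T 0 k * u k 0.
  by move=> k _; rewrite mxE -expr2 sqr_ge0.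
have := psumr_eq0P (P := xpredT) (F := fun k => u^T 0 k * u k 0) hp h0 (i:=i) isT.
by rewrite mxE => /eqP; rewrite mulf_eq0 orbb => /eqP.
Qed.

Theorem mainTheorem1 (R : realType) (n m : nat) (G : 'M[R]_(n, m))
    (v vF ups : 'cV[R]_n)
    (* v = v_F + ups, the orthogonal decomposition along F = R(G) and F^perp *)
    (hdec : v = vF + ups) (hvF : in_range G vF) (hups : in_range_perp G ups)
    (hups0 : ups != 0)
    (* strict tangency: F meets P only at 0 *)
    (htan : forall y, in_range G y -> nonneg_vec y -> y = 0) :
  (exists x, feasible G v x) <->
  (exists y, in_Ce G ups y /\ nonneg_vec y /\ y != 0).
Proof.
have [x1 hx1] := hvF.
split.
- move=> [x hx]; exists (v - G *m x); split; [|split].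
  + exists 1, (vF - G *m x); split => //; split.
      by exists (x1 - x); rewrite mulmxBr hx1.
    by rewrite hdec scale1r [vF + ups]addrC -addrA.
  + by move=> i; move: (hx i); rewrite !mxE subr_ge0.
  + apply/eqP => h; move: hups0; suff /trmx_self0 -> : ups^T *m ups = 0 by rewrite eqxx.
    apply: hups; exists (x - x1); rewrite mulmxBr -hx1.
    by move/eqP: h; rewrite subr_eq0 => /eqP <-; rewrite hdec [vF + _]addrC addrK.
- move=> [y [[t [z [ht [[xz hxz] hy]]]] [hyn hy0]]].
  have [t0|tpos] := eqVneq t 0.
    by move: hy0; rewrite (htan y) ?eqxx //; exists xz; rewrite hy t0 scale0r add0r.
  have tgt : 0 < t by rewrite lt_def tpos ht.
  exists (x1 - t^-1 *: xz) => i.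
  have e : v - G *m (x1 - t^-1 *: xz) = t^-1 *: y.
    rewrite mulmxBr -scalemxAr -hx1 -hxz hdec hy scalerDr scalerA mulVf //.
    by rewrite scale1r opprB addrAC addrCA subrr addr0 addrC.
  have := congr1 (fun M : 'cV[R]_n => M i 0) e; rewrite !mxE => e'.
  rewrite -subr_ge0 e' mulr_ge0 // invr_ge0 //.
Qed.
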